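(* Assume $k>1$. Then (1) $r\in\{e-k,\dots,e-1\}$; (2) $0\le l_{k-1}\le\dots\le l_2\le l_1\le p-1$; (3) $c-\delta=p+k+\sum_{i=1}^{k-1}l_i$ and $\delta=(p+1)(e-1)-h-\sum_{i=1}^{k-1}(l_i+1)$.
   Context: Let $(R,\mathfrak m)$ be a one-dimensional local Noetherian domain with quotient field $K$, not regular, analytically irreducible (the integral closure $\overline R$ of $R$ in $K$ is a DVR and a finite $R$-module) and residually rational. Let $v$ be the valuation of $\overline R$ normalized so a uniformizer $t$ has value 1, $v(R)=\{v(a):a\in R\setminus\{0\}\}$, $\mathfrak C=(R:_K\overline R)=t^c\overline R$ with $c$ the least element of $v(R)$ with $c+\mathbb N\subseteq v(R)$, $\delta=\ell_R(\overline R/R)$, $r=\ell_R((R:_K\mathfrak m)/R)$, $e$ the least positive element of $v(R)$. Let $x\in\mathfrak m$ with $v(x)=e$ and $k=\ell_R(R/(\mathfrak C+xR))$. When $k>1$: $p$ is the integer with $c-e\le pe<c$, $h=(p+1)e-c$; $y_1<\dots<y_{k-1}$ are the nonzero elements of $v(R)\setminus v(\mathfrak C+xR)$ (equivalently the $y\in v(R)$ with $0<y<c$ and $y-e\notin v(R)$; they are not multiples of $e$, exceed $e$, and have distinct residues mod $e$); $l_i\ge0$ is the integer with $y_i+l_ie<c\le y_i+(l_i+1)e$. Then $v(R)$ is the disjoint union of $\{0,e,\dots,pe\}$, $\{m\ge c\}$ and the sets $\{y_i,y_i+e,\dots,y_i+l_ie\}$. *)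

(* Defs.v *)
From HB Require Import structures.
From mathcomp Require Import all_boot all_order all_algebra.
Set Implicit Arguments. Unset Strict Implicit. Unset Printing Implicit Defensive.
Import Order.TTheory GRing.Theory Num.Theory.
Local Open Scope ring_scope.

Section Defs.
Variable K : fieldType.
Implicit Types (R M N A B I P : K -> Prop).

Definition is_subring R : Prop :=
  [/\ R 0, R 1, (forall a b, R a -> R b -> R (a - b)) &
      (forall a b, R a -> R b -> R (a * b))].

Definition quotient_field_of R : Prop :=
  forall z : K, exists a b, [/\ R a, R b, b != 0 & z = a / b].

Definition is_ideal R I : Prop :=
  [/\ (forall a, I a -> R a), I 0, (forall a b, I a -> I b -> I (a + b)) &
      (forall a b, R a -> I b -> I (a * b))].

Definition fg_ideal R I : Prop :=
  exists s : seq K, (forall i, (i < size s)%N -> I s`_i) /\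
    forall z, I z <-> exists cs : seq K, [/\ size cs = size s,
       (forall i, (i < size cs)%N -> R cs`_i) & z = \sum_(i < size s) cs`_i * s`_i].

Definition noetherian R : Prop := forall I, is_ideal R I -> fg_ideal R I.

(* non-units of R *)
Definition maxideal R : K -> Prop := fun a => R a /\ ~ (a != 0 /\ R a^-1).

Definition is_local R : Prop := is_ideal R (maxideal R).

Definition prime_ideal R P : Prop :=
  [/\ is_ideal R P, ~ P 1 &
      forall a b, R a -> R b -> P (a * b) -> P a \/ P b].

Definition krull_dim1 R : Prop :=
  (exists P, prime_ideal R P /\ exists z, P z /\ z != 0) /\
  forall P, prime_ideal R P -> (exists z, P z /\ z != 0) ->
    forall I, is_ideal R I -> (forall z, P z -> I z) ->
      (forall z, I z -> P z) \/ I 1.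

(* a one-dimensional Noetherian local ring is regular iff its maximal
   ideal is principal *)
Definition regular_dim1 R : Prop :=
  exists g, R g /\ forall z, maxideal R z <-> exists a, R a /\ z = a * g.

(* normalized discrete valuation v on K (v 0 is irrelevant) *)
Definition normalized_valuation (v : K -> int) : Prop :=
  [/\ (forall x y, x != 0 -> y != 0 -> v (x * y) = v x + v y),
      (forall x y, x != 0 -> y != 0 -> x + y != 0 ->
          Num.min (v x) (v y) <= v (x + y)) &
      exists t, t != 0 /\ v t = 1].

Definition valring (v : K -> int) : K -> Prop := fun z => z = 0 \/ 0 <= v z.
Definition valmax (v : K -> int) : K -> Prop := fun z => z = 0 \/ 0 < v z.

Definition integral_closure R : K -> Prop :=
  fun z => exists p : {poly K}, [/\ p \is monic, (forall i, R p`_i) & root p z].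

Definition finite_module R B : Prop :=
  exists s : seq K, (forall i, (i < size s)%N -> B s`_i) /\
    forall z, B z <-> exists cs : seq K, [/\ size cs = size s,
       (forall i, (i < size cs)%N -> R cs`_i) & z = \sum_(i < size s) cs`_i * s`_i].

Definition submodule R M : Prop :=
  [/\ M 0, (forall a b, M a -> M b -> M (a + b)) &
      (forall a b, R a -> M b -> M (a * b))].

Definition subset_of A B : Prop := forall z, A z -> B z.

(* M/N is a simple R-module, for R-submodules N of M *)
Definition simple_step R N M : Prop :=
  [/\ subset_of N M, (exists z, M z /\ ~ N z) &
      forall X, submodule R X -> subset_of N X -> subset_of X M ->
        subset_of X N \/ subset_of M X].

(* length_R (M/N) = n : there is a composition series of length n from N to M *)
Definition length_eq R N M (n : nat) : Prop :=
  exists S : nat -> K -> Prop,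
    [/\ (forall i, submodule R (S i)),
        (forall z, S 0%N z <-> N z), (forall z, S n z <-> M z) &
        forall i, (i < n)%N -> simple_step R (S i) (S i.+1)].

Definition colon R A : K -> Prop := fun z => forall a, A a -> R (z * a).

Definition valset (v : K -> int) A : nat -> Prop :=
  fun n => exists a, [/\ A a, a != 0 & v a = n%:Z].

Definition sum_cxR R (C : K -> Prop) (x : K) : K -> Prop :=
  fun z => exists c b, [/\ C c, R b & z = c + x * b].

End Defs.

(* Main.v *)
Require Import Defs.
From HB Require Import structures.
From mathcomp Require Import all_boot all_order all_algebra zify ring.
From Stdlib Require Import ClassicalEpsilon.
Import Order.TTheory GRing.Theory Num.Theory.
Local Open Scope ring_scope.
Set Implicit Arguments. Unset Strict Implicit. Unset Printing Implicit Defensive.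

Definition pb (P : Prop) : bool :=
  if excluded_middle_informative P then true else false.
Arguments pb : simpl never.
Lemma pbP P : reflect P (pb P).
Proof. rewrite /pb; case: excluded_middle_informative => h; by constructor. Qed.
Lemma pb_eq P Q : (P <-> Q) -> pb P = pb Q.
Proof. move=> h; apply/idP/idP => /pbP ?; apply/pbP; tauto. Qed.

Section Val.
Variable K : fieldType.
Variable v : K -> int.
Hypothesis Hv : normalized_valuation v.

Lemma vM x y : x != 0 -> y != 0 -> v (x * y) = v x + v y.
Proof. by case: Hv => h _ _; apply: h. Qed.
Lemma vmin x y m : x != 0 -> y != 0 -> x + y != 0 -> m <= v x -> m <= v y ->
  m <= v (x + y).
Proof. case: Hv => _ h _ hx hy hxy h1 h2. have := h x y hx hy hxy. lia. Qed.
Lemma v1 : v 1 = 0.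
Proof. have := vM (oner_neq0 K) (oner_neq0 K). rewrite mulr1 => h; apply: (@addrI _ (v 1)); by rewrite addr0 -h. Qed.
Lemma vN x : x != 0 -> v (- x) = v x.
Proof.
have h : (-1 : K) != 0 by rewrite oppr_eq0 oner_neq0.
have := vM h h; rewrite mulrNN mulr1 v1 => e1.
move=> hx; rewrite -mulN1r vM //. lia.
Qed.
Lemma vV x : x != 0 -> v x^-1 = - v x.
Proof. move=> hx; have := vM hx (invr_neq0 hx). rewrite mulfV // v1. lia. Qed.
Lemma vstrict x y : x != 0 -> v x < v y -> v (x + y) = v x.
Proof.
move=> hx hlt; have [->|hy] := eqVneq y 0; first by rewrite addr0.
have hxy : x + y != 0.
  apply/eqP => e; move: hlt; have -> : y = - x by rewrite -(addKr x y) e addr0.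
  rewrite vN //; lia.
have h1 := vmin (m := v x) hx hy hxy (lexx _) (ltW hlt).
have h2 : ~ (v x + 1 <= v (x + y)).
  move=> h; have hy' : - y != 0 by rewrite oppr_eq0.
  have := vmin (m := v x + 1) hxy hy'.
  rewrite addrK vN // => /(_ hx h); lia.
lia.
Qed.
Lemma vX x n : x != 0 -> v (x ^+ n) = n%:Z * v x.
Proof.
move=> hx; elim: n => [|n IH]; first by rewrite expr0 v1 mul0r.
rewrite exprS vM ?expf_neq0 // IH. lia.
Qed.
Lemma tpow n : exists z, z != 0 /\ v z = n%:Z.
Proof.
case: Hv => _ _ [t [ht vt]]; exists (t ^+ n); split; first exact: expf_neq0.
by rewrite vX // vt mulr1.
Qed.
End Val.

Section Ring.
Variable K : fieldType.
Variable R : K -> Prop.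
Variable v : K -> int.
Hypothesis HR : is_subring R.
Hypothesis Hv : normalized_valuation v.
Hypothesis Hic : forall z, integral_closure R z <-> valring v z.

Lemma R0 : R 0. Proof. by case: HR. Qed.
Lemma R1 : R 1. Proof. by case: HR. Qed.
Lemma RB a b : R a -> R b -> R (a - b). Proof. by case: HR => _ _ h _; apply: h. Qed.
Lemma RM a b : R a -> R b -> R (a * b). Proof. by case: HR => _ _ _ h; apply: h. Qed.
Lemma RN a : R a -> R (- a). Proof. by move=> h; rewrite -sub0r; apply: RB => //; apply: R0. Qed.
Lemma RD a b : R a -> R b -> R (a + b).
Proof. by move=> ha hb; rewrite -(opprK b); apply: RB => //; apply: RN. Qed.
Lemma Rsum (I : Type) (r : seq I) (P : pred I) (F : I -> K) :
  (forall i, P i -> R (F i)) -> R (\sum_(i <- r | P i) F i).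
Proof. by move=> h; apply: big_ind => //; [exact: R0 | exact: RD]. Qed.
Lemma RX a n : R a -> R (a ^+ n).
Proof. by move=> ha; elim: n => [|n IH]; [rewrite expr0; exact: R1 | rewrite exprS; exact: RM]. Qed.

Lemma Rnn a : R a -> a != 0 -> 0 <= v a.
Proof.
move=> ha hna; have : valring v a.
  apply/Hic; exists ('X - a%:P); split; first exact: monicXsubC.
    move=> i; rewrite coefB coefX coefC.
    case: (i == 1); case: (i == 0); rewrite ?mulr1n ?mulr0n.
    - exact: RB R1 ha.
    - by rewrite subr0; exact: R1.
    - exact: RB R0 ha.
    - by rewrite subr0; exact: R0.
  by rewrite root_XsubC.
by case=> [/eqP|//]; rewrite (negbTE hna).
Qed.

Lemma Sadd m n : valset v R m -> valset v R n -> valset v R (m + n)%N.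
Proof.
case=> a [ha na va] [b [hb nb vb]]; exists (a * b); split.
- exact: RM.
- exact: mulf_neq0.
- by rewrite (vM Hv) // va vb PoszD.
Qed.
Lemma S0 : valset v R 0.
Proof. exists 1; split; [exact: R1 | exact: oner_neq0 | exact: (v1 Hv)]. Qed.

End Ring.
Arguments RB {K R} HR {a b}.
Arguments RM {K R} HR {a b}.
Arguments RD {K R} HR {a b}.
Arguments RN {K R} HR {a}.
Arguments RX {K R} HR {a} n.

Section Cond.
Variable K : fieldType.
Variable R : K -> Prop.
Variable v : K -> int.
Variable c : nat.
Hypothesis HR : is_subring R.
Hypothesis Hv : normalized_valuation v.
Hypothesis Hic : forall z, integral_closure R z <-> valring v z.
Hypothesis Hq : quotient_field_of R.
Hypothesis Hfin : finite_module R (valring v).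
Hypothesis Hres : forall z, valring v z -> exists a, R a /\ valmax v (z - a).
Hypothesis Hc2 : forall n, valset v R (c + n).

Lemma Rden : exists d, [/\ R d, d != 0 & forall z, valring v z -> R (d * z)].
Proof.
case: Hfin => s [_ hs].
have [d [Rd dn hd]] : exists d, [/\ R d, d != 0 &
    forall i, (i < size s)%N -> R (d * s`_i)].
  elim: {hs} s => [|h t [d [Rd dn hd]]].
    by exists 1; split => //; [exact: R1 HR | exact: oner_neq0].
  case: (Hq h) => a [b [Ra Rb bn ->]].
  exists (d * b); split; first exact: (RM HR Rd Rb).
    exact: mulf_neq0.
  move=> [|i] /=.
    have -> : d * b * (a / b) = d * a by field.
    by move=> _; exact: (RM HR Rd Ra).
  move=> hi; rewrite mulrAC; apply: (RM HR _ Rb); exact: hd.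
exists d; split => // z /hs [cs [hsz hcs ->]].
rewrite mulr_sumr; apply: big_ind => //; [exact: R0 HR | exact: RD HR | move=> i _].
have h1 : R cs`_i by have := hcs i; rewrite hsz ltn_ord => /(_ isT).
have h2 := hd i (ltn_ord i).
rewrite mulrCA; exact (RM HR h1 h2).
Qed.

Lemma Tc z : z != 0 -> c%:Z <= v z -> R z.
Proof.
case: Rden => d [Rd dn hd].
have hvd := Rnn HR Hic Rd dn.
have [M hM] : exists M : nat, v d = M%:Z by exists `|v d|%N; lia.
suff H : forall kk : nat, forall z, z != 0 -> c%:Z <= v z ->
    M%:Z <= v z + kk%:Z -> R z.
  move=> hz hc; apply: (H `|M%:Z - v z|%N) => //; lia.
elim=> [|kk IH] {}z hz hcz hM'.
  have -> : z = d * (z / d) by field.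
  apply: hd; right; rewrite (vM Hv) ?(vV Hv) //; last exact: invr_neq0.
  lia.
have [hle|hlt] := boolP (M%:Z <= v z).
  have -> : z = d * (z / d) by field.
  apply: hd; right; rewrite (vM Hv) ?(vV Hv) //; last exact: invr_neq0.
  lia.
have [n hn] : exists n : nat, v z = n%:Z by exists `|v z|%N; lia.
have := Hc2 (n - c); rewrite subnKC; last lia.
case=> a [Ra an va].
have hza : valring v (z / a).
  right; rewrite (vM Hv) ?(vV Hv) //; last exact: invr_neq0. lia.
case: (Hres hza) => b [Rb hb].
have [h0|hne] := eqVneq (z / a - b) 0.
  have -> : z = a * b.
    have -> : b = z / a by apply/eqP; rewrite eq_sym -subr_eq0 h0.
    by field.
  exact: (RM HR Ra Rb).
have hpos : 0 < v (z / a - b) by case: hb => // /eqP; rewrite (negbTE hne).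
have hz' : a * (z / a - b) != 0 by exact: mulf_neq0.
have hvz' : v (a * (z / a - b)) = v z + v (z / a - b) by rewrite (vM Hv) // va hn.
have Rz' : R (a * (z / a - b)).
  apply: IH => //; first lia.
  rewrite hvz'; lia.
have -> : z = a * (z / a - b) + a * b by field.
exact: (RD HR Rz' (RM HR Ra Rb)).
Qed.
End Cond.

Lemma pbT (P : Prop) : P -> pb P = true. Proof. by move/pbP. Qed.
Lemma pbF (P : Prop) : ~ P -> pb P = false. Proof. by move=> h; apply/pbP. Qed.

Lemma sum_eq1 (B j0 : nat) : (\sum_(j < B) ((j : nat) == j0 : nat))%N = (j0 < B)%N.
Proof.
elim: B => [|B IH]; first by rewrite big_ord0.
rewrite big_ord_recr /= IH; case: (ltngtP j0 B) => h.
- by rewrite ltnS (ltnW h).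
- by rewrite ltnS leqNgt h.
- by rewrite h ltnS leqnn.
Qed.

Section Len.
Variable K : fieldType.
Variable R : K -> Prop.
Variable v : K -> int.
Hypothesis HR : is_subring R.
Hypothesis Hv : normalized_valuation v.
Hypothesis Hic : forall z, integral_closure R z <-> valring v z.
Hypothesis Hres : forall z, valring v z -> exists a, R a /\ valmax v (z - a).

Variables (N M : K -> Prop) (B : nat).
Hypothesis HN : submodule R N.
Hypothesis HM : submodule R M.
Hypothesis Hst : simple_step R N M.
Hypothesis Mnn : forall z, M z -> z != 0 -> 0 <= v z.
Hypothesis NB : forall z, z != 0 -> B%:Z <= v z -> N z.

Lemma sub_N0 : N 0. Proof. by case: HN. Qed.
Lemma sub_ND a b : N a -> N b -> N (a + b). Proof. by case: HN => _ h _; apply: h. Qed.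
Lemma sub_NM a b : R a -> N b -> N (a * b). Proof. by case: HN => _ _ h; apply: h. Qed.
Lemma sub_MD a b : M a -> M b -> M (a + b). Proof. by case: HM => _ h _; apply: h. Qed.
Lemma sub_MM a b : R a -> M b -> M (a * b). Proof. by case: HM => _ _ h; apply: h. Qed.
Lemma NsubM : subset_of N M. Proof. by case: Hst. Qed.

Lemma ov_exists : exists j0, valset v M j0 /\ ~ valset v N j0.
Proof.
case: Hst => _ [z [Mz Nz]] _.
suff H : forall kk : nat, forall z, M z -> ~ N z -> B%:Z <= v z + kk%:Z ->
  exists j0, valset v M j0 /\ ~ valset v N j0.
  have hz : z != 0 by apply/eqP => e; apply: Nz; rewrite e; exact: sub_N0.
  have := Mnn Mz hz => hnn.
  apply: (H `|B%:Z - v z|%N z) => //; lia.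
clear Mz Nz; elim=> [|kk IH] {}z Mz Nz hB;
  (have hz : z != 0 by apply/eqP => e; apply: Nz; rewrite e; exact: sub_N0);
  have hnn := Mnn Mz hz;
  have [n hn] : exists n : nat, v z = n%:Z by exists `|v z|%N; lia.
  have hB' : B%:Z <= v z by lia.
  by case: Nz; apply: NB.
have [hVN|hVN] := pbP (valset v N n); last first.
  by exists n; split => //; exists z; split.
case: hVN => w [Nw wn vw].
have hzw : valring v (z / w).
  by right; rewrite (vM Hv) ?(vV Hv) ?invr_neq0 // vw hn; lia.
case: (Hres hzw) => b [Rb hb].
have [h0|hne] := eqVneq (z / w - b) 0.
  case: Nz; have -> : z = b * w.
    have -> : b = z / w by apply/eqP; rewrite eq_sym -subr_eq0 h0.
    by field.
  exact: sub_NM.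
have hpos : 0 < v (z / w - b) by case: hb => // /eqP; rewrite (negbTE hne).
have hz'e : z + (- b) * w = w * (z / w - b) by field.
apply: (IH (z + (- b) * w)).
- apply: sub_MD => //; apply: sub_MM; first exact: (RN HR Rb).
  exact: NsubM.
- move=> Nz'; apply: Nz; have -> : z = (z + - b * w) + b * w by ring.
  by apply: sub_ND => //; exact: sub_NM.
- rewrite hz'e (vM Hv) // vw -hn; lia.
Qed.

Lemma ov_unique j1 j2 : valset v M j1 -> ~ valset v N j1 ->
  valset v M j2 -> ~ valset v N j2 -> (j1 < j2)%N -> False.
Proof.
move=> [z1 [M1 n1 v1']] N1 [z2 [M2 n2 v2']] N2 hlt.
pose X := fun z => exists n m, [/\ N n, M m, (m = 0 \/ j2%:Z <= v m) & z = n + m].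
have HX : submodule R X.
  split.
  - by exists 0, 0; split; [exact: sub_N0 | case: HM | left | rewrite addr0].
  - move=> a b [na [ma [Nna Mma hma ->]]] [nb [mb [Nnb Mmb hmb ->]]].
    exists (na + nb), (ma + mb); split.
    + exact: sub_ND.
    + exact: sub_MD.
    + case: hma => [->|hma]; first by rewrite add0r.
      case: hmb => [->|hmb]; first by rewrite addr0; right.
      have [->|hma0] := eqVneq ma 0; first by rewrite add0r; right.
      have [->|hmb0] := eqVneq mb 0; first by rewrite addr0; right.
      have [e0|hs] := eqVneq (ma + mb) 0; first by left.
      by right; apply: (vmin Hv).
    + by rewrite addrACA.
  - move=> a b Ra [n [m [Nn Mm hm ->]]].
    exists (a * n), (a * m); split.
    + exact: sub_NM.
    + exact: sub_MM.
    + have [->|ha] := eqVneq a 0; first by rewrite mul0r; left.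
      case: hm => [->|hm]; first by rewrite mulr0; left.
      have [->|hm0] := eqVneq m 0; first by rewrite mulr0; left.
      right; rewrite (vM Hv) //; have := Rnn HR Hic Ra ha; lia.
    + by rewrite mulrDr.
case: Hst => _ _ /(_ X HX).
have h1 : subset_of N X by move=> z Nz; exists z, 0; split => //; [by case: HM | by left | by rewrite addr0].
have h2 : subset_of X M by move=> z [n [m [Nn Mm _ ->]]]; apply: sub_MD => //; exact: NsubM.
case/(_ h1 h2) => [hXN|hMX].
  apply: N2; exists z2; split => //; apply: hXN; exists 0, z2; split => //.
  - exact: sub_N0.
  - by right; rewrite v2'.
  - by rewrite add0r.
case: (hMX _ M1) => n [m [Nn Mm hm e1]].
have [hm0|hmn] := eqVneq m 0.
  by apply: N1; exists z1; split => //; rewrite e1 hm0 addr0.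
case: hm => [hm0|hm]; first by rewrite hm0 eqxx in hmn.
apply: N1; exists n; split => //.
  apply/eqP => e; move: v1'; rewrite e1 e add0r => hv; lia.
have -> : n = z1 + - m by rewrite e1 addrK.
rewrite (vstrict Hv) //; rewrite (vN Hv) //; lia.
Qed.

Lemma one_value : exists j0, [/\ (j0 < B)%N, valset v M j0, ~ valset v N j0 &
  forall j, valset v M j -> ~ valset v N j -> j = j0].
Proof.
case: ov_exists => j0 [h1 h2]; exists j0; split => //.
- rewrite ltnNge; apply/negP => hB; apply: h2.
  case: (tpow Hv j0) => z [hz vz]; exists z; split => //.
  by apply: NB => //; rewrite vz; lia.
- move=> j hj hj'; case: (ltngtP j j0) => // h.
  + by case: (ov_unique hj hj' h1 h2 h).
  + by case: (ov_unique h1 h2 hj hj' h).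
Qed.
End Len.

Lemma valset_mono (K : fieldType) (v : K -> int) (A B : K -> Prop) j :
  subset_of A B -> valset v A j -> valset v B j.
Proof. by move=> h [a [ha an va]]; exists a; split => //; apply: h. Qed.

Section Len2.
Variable K : fieldType.
Variable R : K -> Prop.
Variable v : K -> int.
Hypothesis HR : is_subring R.
Hypothesis Hv : normalized_valuation v.
Hypothesis Hic : forall z, integral_closure R z <-> valring v z.
Hypothesis Hres : forall z, valring v z -> exists a, R a /\ valmax v (z - a).

Lemma len_count N M n B : length_eq R N M n ->
  (forall z, M z -> z != 0 -> 0 <= v z) ->
  (forall z, z != 0 -> B%:Z <= v z -> N z) ->
  n = (\sum_(j < B) pb (valset v M j /\ ~ valset v N j))%N.
Proof.
case=> S [Ssub S0 Sn Sst] Mnn NB.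
have up : forall i, (i <= n)%N -> subset_of N (S i).
  elim=> [|i IH] hi z Nz; first by apply/S0.
  case: (Sst i hi) => h _ _; apply: h; apply: IH => //; exact: ltnW.
have down : forall d i, (i + d = n)%N -> subset_of (S i) M.
  elim=> [|d IH] i hid z Sz.
    by rewrite addn0 in hid; subst; apply/Sn.
  have hi : (i < n)%N by lia.
  apply: (IH i.+1); first lia.
  by case: (Sst i hi) => h _ _; apply: h.
have key : forall i, (i <= n)%N ->
    i = (\sum_(j < B) pb (valset v (S i) j /\ ~ valset v N j))%N.
  elim=> [|i IH] hi.
    rewrite big1 // => j _; rewrite pbF // => -[[a [Sa an va]] h]; apply: h.
    by exists a; split => //; apply/S0.
  have Mnn' : forall z, S i.+1 z -> z != 0 -> 0 <= v z.
    move=> z hz; apply: Mnn; apply: (down (n - i.+1)%N i.+1) => //; lia.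
  have NB' : forall z, z != 0 -> B%:Z <= v z -> S i z.
    by move=> z hz hB; apply: (up i (ltnW hi)); apply: NB.
  have [j0 [hj0 V1 V0 U]] := one_value HR Hv Hic Hres (Ssub i) (Ssub i.+1)
    (Sst i hi) Mnn' NB'.
  have sub01 : subset_of (S i) (S i.+1) by case: (Sst i hi).
  rewrite {1}(IH (ltnW hi)).
  transitivity ((\sum_(j < B) pb (valset v (S i) j /\ ~ valset v N j))
     + \sum_(j < B) ((j : nat) == j0 : nat))%N.
    by rewrite sum_eq1 hj0 addn1.
  rewrite -big_split; apply: eq_bigr => j _ /=.
  have [ej|nej] := eqVneq (j : nat) j0.
    rewrite ej (@pbF (valset v (S i) j0 /\ ~ valset v N j0)); last by case=> h _; apply: V0.
    rewrite pbT //; split => // hN; apply: V0.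
    exact: valset_mono (up i (ltnW hi)) hN.
  rewrite addn0; congr (nat_of_bool _); apply: pb_eq; split.
  - by case=> h1 h2; split => //; apply: valset_mono sub01 h1.
  - case=> h1 h2; split => //.
    by case: (pbP (valset v (S i) j)) => // h3; case/eqP: nej; apply: U.
rewrite {1}(key n (leqnn n)); apply: eq_bigr => j _; congr (nat_of_bool _); apply: pb_eq.
split; case=> h1 h2; split => //.
- exact: valset_mono (fun z hz => proj1 (Sn z) hz) h1.
- exact: valset_mono (fun z hz => proj2 (Sn z) hz) h1.
Qed.
End Len2.

Section Main.
Variable K : fieldType.
Variable R : K -> Prop.
Variable v : K -> int.
Variables (e c : nat) (x : K).
Hypothesis HR : is_subring R.
Hypothesis Hq : quotient_field_of R.
Hypothesis Hloc : is_local R.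
Hypothesis Hreg : ~ regular_dim1 R.
Hypothesis Hv : normalized_valuation v.
Hypothesis Hic : forall z, integral_closure R z <-> valring v z.
Hypothesis Hfin : finite_module R (valring v).
Hypothesis Hres : forall z, valring v z -> exists a, R a /\ valmax v (z - a).
Hypothesis Hc2 : forall n, valset v R (c + n).
Hypothesis Hc3 : forall d, valset v R d -> (forall n, valset v R (d + n)) -> (c <= d)%N.
Hypothesis He2 : (0 < e)%N.
Hypothesis He3 : forall n, valset v R n -> (0 < n)%N -> (e <= n)%N.
Hypothesis Hxm : maxideal R x.
Hypothesis Hx0 : x != 0.
Hypothesis Hvx : v x = e%:Z.

Let TC := Tc HR Hv Hic Hq Hfin Hres Hc2.

Lemma Runit a : R a -> a != 0 -> v a = 0 -> R a^-1.
Proof.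
move=> Ra an va.
have hza : valring v a^-1 by right; rewrite (vV Hv) // va.
case: (Hres hza) => b [Rb hb].
have [h0|hne] := eqVneq (a^-1 - b) 0.
  by have -> : a^-1 = b by apply/eqP; rewrite -subr_eq0 h0.
have hpos : 0 < v (a^-1 - b) by case: hb => // /eqP; rewrite (negbTE hne).
set w := 1 - a * b.
have hw : w = a * (a^-1 - b) by rewrite /w; field.
have wn : w != 0 by rewrite hw mulf_neq0.
have vw : 0 < v w by rewrite hw (vM Hv) // va add0r.
have Rw : R w := RB HR (R1 HR) (RM HR Ra Rb).
have h1w : 1 - w = a * b by rewrite /w; ring.
have v1w : v (1 - w) = 0.
  rewrite (vstrict Hv (oner_neq0 K)) ?(v1 Hv) //.
  by rewrite (vN Hv) //.
have n1w : 1 - w != 0.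
  apply/eqP => e0; have w1 : w = 1 by apply/eqP; rewrite eq_sym -subr_eq0 e0.
  by move: vw; rewrite w1 (v1 Hv).
have bn : b != 0 by apply/eqP => e0; move: n1w; rewrite h1w e0 mulr0 eqxx.
set u := \sum_(i < c) w ^+ i.
have Ru : R u.
  rewrite /u; apply: big_ind => //; [exact: R0 HR | exact: RD HR | move=> i _].
  exact: (RX HR i Rw).
have Rq : R (w ^+ c / (1 - w)).
  apply: TC; first by rewrite mulf_neq0 ?expf_neq0 ?invr_neq0.
  rewrite (vM Hv) ?expf_neq0 ?invr_neq0 // (vX Hv) // (vV Hv) // v1w.
  nia.
have hinv : (1 - w)^-1 = u + w ^+ c / (1 - w).
  apply: (mulfI n1w); rewrite mulfV // mulrDr.
  have hu : (1 - w) * u = 1 - w ^+ c.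
    by rewrite /u -opprB mulNr -subrX1 opprB.
  by rewrite hu mulrCA mulfV // mulr1 subrK.
have -> : a^-1 = b * (1 - w)^-1.
  by rewrite h1w; field; rewrite bn an.
by rewrite hinv; exact (RM HR Rb (RD HR Ru Rq)).
Qed.

Lemma Mpos a : maxideal R a -> a != 0 -> e%:Z <= v a.
Proof.
case=> Ra hna an; have := Rnn HR Hic Ra an => h0.
have [va0|vapos] := eqVneq (v a) 0.
  by case: hna; split => //; exact: Runit.
have [n hn] : exists n : nat, v a = n%:Z by exists `|v a|%N; lia.
have : (e <= n)%N.
  apply: He3; first by exists a; split.
  lia.
lia.
Qed.

Lemma Cval c0 : colon R (valring v) c0 -> c0 != 0 -> c%:Z <= v c0.
Proof.
move=> hc c0n.
have R0' : R c0 by have := hc 1; rewrite mulr1; apply; right; rewrite (v1 Hv).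
have := Rnn HR Hic R0' c0n => h0.
have [n hn] : exists n : nat, v c0 = n%:Z by exists `|v c0|%N; lia.
rewrite hn lez_nat; apply: Hc3; first by exists c0; split.
move=> m; case: (tpow Hv m) => t [tn vt].
exists (c0 * t); split.
- by apply: hc; right; rewrite vt.
- exact: mulf_neq0.
- by rewrite (vM Hv) // hn vt.
Qed.

Definition Cx := sum_cxR R (colon R (valring v)) x.

Lemma VC j : (j < c)%N -> (valset v Cx j <-> (e <= j)%N /\ valset v R (j - e)).
Proof.
move=> hjc; split.
  case=> z [[c0 [b [hc0 Rb ->]]] zn vz].
  have [b0|bn] := eqVneq b 0.
    move: zn vz; rewrite b0 mulr0 addr0 => zn vz.
    by have := Cval hc0 zn; lia.
  have xbn : x * b != 0 by exact: mulf_neq0.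
  have vxb : v (x * b) = e%:Z + v b by rewrite (vM Hv) // Hvx.
  have vbn := Rnn HR Hic Rb bn.
  have [n hn] : exists n : nat, v b = n%:Z by exists `|v b|%N; lia.
  suff hv : v (x * b) = j%:Z.
    split; first lia.
    have -> : (j - e)%N = n by lia.
    by exists b; split.
  have [c00|c0n] := eqVneq c0 0; first by move: vz; rewrite c00 add0r.
  have hcv := Cval hc0 c0n.
  have [hlt|hge] := ltP (v (x * b)) c%:Z.
    by rewrite -vz addrC (vstrict Hv) //; lia.
  have := vmin Hv c0n xbn zn hcv hge; rewrite vz; lia.
case=> hej [b [Rb bn vb]]; exists (0 + x * b); split.
- exists 0, b; split => //; move=> a _; rewrite mul0r; exact: R0 HR.
- by rewrite add0r; exact: mulf_neq0.
- by rewrite add0r (vM Hv) // Hvx vb; lia.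
Qed.

Lemma Chigh j : (c <= j)%N -> valset v Cx j.
Proof.
move=> hcj; case: (tpow Hv j) => z [zn vz].
exists (z + x * 0); split; last by rewrite mulr0 addr0.
- exists z, 0; split => //; last exact: R0 HR.
  move=> a [->|ha]; first by rewrite mulr0; exact: R0 HR.
  have [->|an] := eqVneq a 0; first by rewrite mulr0; exact: R0 HR.
  apply: TC; first exact: mulf_neq0.
  rewrite (vM Hv) // vz; lia.
- by rewrite mulr0 addr0.
Qed.

Lemma colon_high j : (c <= j + e)%N -> valset v (colon R (maxideal R)) j.
Proof.
move=> hcj; case: (tpow Hv j) => z [zn vz].
exists z; split => //.
move=> a ha; have [->|an] := eqVneq a 0; first by rewrite mulr0; exact: R0 HR.
have := Mpos ha an => hva.
apply: TC; first exact: mulf_neq0.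
rewrite (vM Hv) // vz; lia.
Qed.

Lemma Col_nn z : colon R (maxideal R) z -> z != 0 -> 0 <= v z.
Proof.
move=> hz zn; rewrite leNgt; apply/negP => hneg.
have Rzx : R (z * x) by apply: hz.
have zxn : z * x != 0 by exact: mulf_neq0.
have vzx : v (z * x) = v z + e%:Z by rewrite (vM Hv) // Hvx.
have h0 := Rnn HR Hic Rzx zxn.
have [vz0|vzpos] := eqVneq (v (z * x)) 0; last first.
  have [n hn] : exists n : nat, v (z * x) = n%:Z by exists `|v (z * x)|%N; lia.
  have : (e <= n)%N by apply: He3; [exists (z * x); split | lia].
  lia.
have Ru := Runit Rzx zxn vz0.
apply: Hreg; exists x; split; first by case: Hxm.
move=> w; split.
  move=> hw; exists ((z * x)^-1 * (z * w)); split.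
    exact: (RM HR Ru (hz w hw)).
  by field; rewrite zn Hx0.
case=> a [Ra ->]; case: Hloc => _ _ _; apply => //.
Qed.


Definition sb j := pb (valset v R j).

Lemma sbT j : valset v R j -> sb j = true. Proof. exact: pbT. Qed.
Lemma sb_add m n : sb m -> sb n -> sb (m + n)%N.
Proof. by move=> /pbP h1 /pbP h2; apply/pbP; exact (Sadd HR Hv h1 h2). Qed.
Lemma sb0 : sb 0. Proof. apply/pbP; exact: S0 HR Hv. Qed.
Lemma sbe : sb e.
Proof. by apply/pbP; exists x; split => //; case: Hxm. Qed.
Lemma sb_high j : (c <= j)%N -> sb j.
Proof. by move=> h; apply/pbP; rewrite -(subnKC h); apply: Hc2. Qed.
Lemma sb_low j : (0 < j < e)%N -> sb j = false.
Proof.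
case/andP=> h1 h2; apply/pbP => h; have := He3 h h1; lia.
Qed.
Lemma sb_e j : sb j -> sb (j + e)%N. Proof. by move=> h; apply: sb_add h sbe. Qed.

Variables (k p : nat) (y l : nat -> nat).
Hypothesis Hk : (1 < k)%N.
Hypothesis Hp1 : (c <= p * e + e)%N.
Hypothesis Hp2 : (p * e < c)%N.
Hypothesis Hyinc : forall i j, (i < j)%N -> (j < k.-1)%N -> (y i < y j)%N.
Hypothesis Hyiff : forall n, [/\ (0 < n)%N, valset v R n &
                 ~ valset v (sum_cxR R (colon R (valring v)) x) n]
             <-> exists2 i, (i < k.-1)%N & y i = n.
Hypothesis Hl : forall i, (i < k.-1)%N ->
  (y i + l i * e < c)%N /\ (c <= y i + (l i).+1 * e)%N.

Lemma yprop i : (i < k.-1)%N ->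
  [/\ (0 < y i)%N, valset v R (y i) & ~ valset v Cx (y i)].
Proof. by move=> hi; apply/Hyiff; exists i. Qed.

Lemma y_lt_c i : (i < k.-1)%N -> (y i < c)%N.
Proof.
move=> hi; case: (yprop hi) => _ _ h; rewrite ltnNge; apply/negP => hc.
by apply: h; apply: Chigh.
Qed.

Lemma y_inj i j : (i < k.-1)%N -> (j < k.-1)%N -> y i = y j -> i = j.
Proof.
move=> hi hj e0; case: (ltngtP i j) => // h.
- by have := Hyinc h hj; rewrite e0 ltnn.
- by have := Hyinc h hi; rewrite e0 ltnn.
Qed.

Lemma y0_gt_e : (e < y 0)%N.
Proof.
have h0 : (0 < k.-1)%N by lia.
case: (yprop h0) => hpos hS hC.
have hey : (e <= y 0)%N by apply: He3.
rewrite ltn_neqAle hey andbT; apply/eqP => ey; apply: hC; rewrite -ey.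
apply/VC; first by rewrite ey; exact: y_lt_c.
split => //; rewrite subnn; exact: S0 HR Hv.
Qed.

Lemma c_pos : (e < c)%N.
Proof. have := y0_gt_e; have := @y_lt_c 0%N; lia. Qed.

Definition yb j := [exists i : 'I_k.-1, y i == j].

Lemma ybP j : reflect (exists2 i, (i < k.-1)%N & y i = j) (yb j).
Proof.
apply: (iffP existsP) => [[i /eqP hi]|[i hi hyi]].
  by exists i.
by exists (Ordinal hi); rewrite /= hyi.
Qed.

Lemma F1 j : (j < c)%N ->
  sb j = ((j == 0%N) + yb j + ((e <= j)%N && sb (j - e)%N))%N :> nat.
Proof.
move=> hjc.
have [->|jn] := eqVneq j 0%N.
  rewrite sb0 (_ : yb 0 = false); last first.
    apply/ybP => -[i hi h]; case: (yprop hi) => h1 _ _; move: h1; rewrite h ltnn //.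
  by rewrite leqNgt He2.
have jpos : (0 < j)%N by lia.
have [hC|hC] := pbP (valset v Cx j).
  case/(VC hjc): hC => hej hS.
  have -> : sb j = true by rewrite -(subnK hej); apply: sb_add => //; [exact/pbP | exact: sbe].
  rewrite hej (_ : sb (j - e)%N = true); last exact/pbP.
  rewrite (_ : yb j = false)  //.
  apply/ybP => -[i hi hyi]; case: (yprop hi) => _ _; rewrite hyi; apply.
  by apply/VC.
have [hS|hS] := pbP (valset v R j).
  rewrite (_ : yb j = true); last by apply/ybP; apply/Hyiff; split.
  rewrite (sbT hS) (_ : (e <= j)%N && sb (j - e)%N = false) //.
  apply/negbTE/negP => /andP [hej /pbP hS']; apply: hC; apply/VC => //.
rewrite (_ : yb j = false); last first.
  apply/ybP => -[i hi hyi]; case: (yprop hi) => _; rewrite hyi => h; by case: hS.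
rewrite /sb (pbF hS) (_ : (e <= j)%N && pb (valset v R (j - e)%N) = false) //.
apply/negbTE/negP => /andP [hej hS']; apply: hS; apply/pbP.
rewrite -(subnK hej); apply: sb_add => //; exact: sbe.
Qed.


Definition f B := (\sum_(j < B) sb j)%N.
Definition ny B := (\sum_(i < k.-1) (y i < B)%N)%N.

Lemma yb_sum j : (yb j : nat) = (\sum_(i < k.-1) (y i == j)%N)%N.
Proof.
have [[i0 hi0 hy0]|hn] := pbP (exists2 i, (i < k.-1)%N & y i = j).
  rewrite (introT (ybP j) (ex_intro2 _ _ i0 hi0 hy0)).
  rewrite (bigD1 (Ordinal hi0)) //= hy0 eqxx big1 // => i hi.
  case: eqP => // hyi; exfalso; move: hi; rewrite -(inj_eq val_inj) /= => /eqP; apply.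
  by apply: y_inj => //; rewrite hyi hy0.
rewrite (introF (ybP j) hn) big1 // => i _.
by case: eqP => // hyi; case: hn; exists i.
Qed.

Lemma sum_yb B : (\sum_(j < B) yb j)%N = ny B.
Proof.
rewrite /ny (eq_bigr (fun j : 'I_B => \sum_(i < k.-1) (y i == j)%N)%N); last first.
  by move=> j _; rewrite yb_sum.
rewrite exchange_big /=; apply: eq_bigr => i _.
rewrite -sum_eq1; apply: eq_bigr => j _.
by rewrite eq_sym.
Qed.

Lemma shift_sum B : (\sum_(j < B) ((e <= j)%N && sb (j - e)%N))%N = f (B - e)%N.
Proof.
have [hBe|hBe] := leqP B e.
  rewrite (_ : (B - e)%N = 0%N); last lia.
  rewrite /f big_ord0 big1 // => j _.
  by rewrite leqNgt (leq_trans (ltn_ord j) hBe).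
have [B' ->] : exists B', B = (e + B')%N by exists (B - e)%N; lia.
rewrite /f big_split_ord /= big1 ?add0n; last first.
  by move=> j _; rewrite leqNgt ltn_ord.
rewrite addKn; apply: eq_bigr => j _; rewrite leq_addr /=.
by rewrite addKn.
Qed.

Lemma F2 B : (B <= c)%N -> f B = ((0 < B)%N + ny B + f (B - e)%N)%N.
Proof.
move=> hBc.
rewrite {1}/f (eq_bigr (fun j : 'I_B => (((j : nat) == 0%N) + yb j + ((e <= j)%N && sb (j - e)%N))%N)); last first.
  by move=> j _; apply: F1; exact: leq_trans (ltn_ord j) hBc.
rewrite !big_split /= sum_yb shift_sum.
by rewrite -sum_eq1.
Qed.


Definition Nc s B := (\sum_(t < c) (s + t * e < B)%N)%N.

Lemma NR s B : (B <= c)%N -> Nc s B = ((s < B)%N + Nc s (B - e)%N)%N.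
Proof.
move=> hBc; rewrite /Nc; move: hBc; case E: c => [|c'] hBc.
  by rewrite !big_ord0; have -> : B = 0%N by lia.
rewrite big_ord_recl big_ord_recr /= mul0n addn0.
have -> : (s + c' * e < B - e)%N = false by nia.
rewrite addn0; congr (_ + _)%N; apply: eq_bigr => t _ /=.
rewrite /bump /=; lia.
Qed.

Definition g B := (Nc 0 B + \sum_(i < k.-1) Nc (y i) B)%N.

Lemma gR B : (B <= c)%N -> g B = ((0 < B)%N + ny B + g (B - e)%N)%N.
Proof.
move=> hBc; rewrite /g /ny NR // (eq_bigr (fun i : 'I_k.-1 => ((y i < B)%N + Nc (y i) (B - e)%N)%N)); last first.
  by move=> i _; rewrite NR.
rewrite big_split /=; lia.
Qed.

Lemma f0 : f 0 = 0%N. Proof. by rewrite /f big_ord0. Qed.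
Lemma g0 : g 0 = 0%N.
Proof.
rewrite /g /Nc big1 ?add0n; last by move=> t _; rewrite ltn0.
by rewrite big1 // => i _; rewrite big1 // => t _; rewrite ltn0.
Qed.

Lemma fg B : (B <= c)%N -> f B = g B.
Proof.
suff H : forall n B, (B <= n)%N -> (B <= c)%N -> f B = g B by move=> h; apply: (H B).
elim=> [|n IH] {}B hBn hBc.
  have -> : B = 0%N by lia.
  by rewrite f0 g0.
have [->|hB0] := eqVneq B 0%N; first by rewrite f0 g0.
rewrite F2 // gR // IH //; lia.
Qed.

Lemma sum_lt (n m : nat) : (\sum_(t < n) (t < m)%N)%N = minn m n.
Proof.
elim: n => [|n IH]; first by rewrite big_ord0 minn0.
rewrite big_ord_recr /= IH; lia.
Qed.

Lemma Nval s L : (s + L * e < c)%N -> (c <= s + L.+1 * e)%N -> Nc s c = L.+1.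
Proof.
move=> h1 h2.
have -> : Nc s c = (\sum_(t < c) ((t : nat) < L.+1)%N)%N.
  apply: eq_bigr => t _; congr (nat_of_bool _); apply/idP/idP => h; last by nia.
  by rewrite ltnNge; apply/negP => hL; move: h; rewrite ltnNge; apply/negP/negPn; nia.
rewrite sum_lt; nia.
Qed.


Lemma split_sum (F : nat -> nat) B m n : B = (m + n)%N ->
  (\sum_(j < B) F j = \sum_(j < m) F j + \sum_(j < n) F (m + j))%N.
Proof. by move=> ->; rewrite big_split_ord. Qed.

Lemma sum_one n : (\sum_(j < n) 1)%N = n.
Proof.
rewrite (eq_bigr (fun j : 'I_n => ((j : nat) < n)%N : nat)); last by move=> j _; rewrite ltn_ord.
by rewrite sum_lt minnn.
Qed.

Lemma fc_formula : f c = (p.+1 + \sum_(i < k.-1) (l i).+1)%N.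
Proof.
have hN0 : Nc 0 c = p.+1 by apply: Nval; nia.
rewrite fg // /g hN0.
congr (_ + _)%N; apply: eq_bigr => i _.
by case: (Hl (ltn_ord i)) => h1 h2; apply: Nval.
Qed.

Lemma ny_c : ny c = k.-1.
Proof.
rewrite /ny (eq_bigr (fun i : 'I_k.-1 => ((i : nat) < k.-1)%N : nat)).
  by rewrite sum_lt minnn.
by move=> i _; rewrite y_lt_c // ltn_ord.
Qed.

Lemma fc_k : f c = (k + f (c - e)%N)%N.
Proof.
rewrite F2 // ny_c; have := c_pos; lia.
Qed.

Lemma f_split : f c = (f (c - e)%N + \sum_(j < e) sb (c - e + j)%N)%N.
Proof. have := c_pos => hc; rewrite /f (split_sum sb (m := (c - e)%N) (n := e)) //; lia. Qed.

Lemma Lw_val : ((\sum_(j < c) ((c <= j + e)%N && ~~ sb j)) + k)%N = e.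
Proof.
have hc := c_pos.
rewrite (split_sum (fun j => ((c <= j + e)%N && ~~ sb j) : nat) (m := (c - e)%N) (n := e)); last lia.
rewrite big1 ?add0n; last by move=> j _; have := ltn_ord j; case: leqP => //; lia.
have hk : k = (\sum_(j < e) sb (c - e + j)%N)%N by have := f_split; rewrite fc_k; lia.
rewrite hk -big_split /=; transitivity (\sum_(j < e) 1)%N; last exact: sum_one.
apply: eq_bigr => j _.
have -> : (c <= c - e + j + e)%N by lia.
by case: (sb _).
Qed.

Lemma sum_low : (\sum_(j < e) sb j)%N = 1%N.
Proof.
rewrite (eq_bigr (fun j : 'I_e => ((j : nat) == 0%N) : nat)).
  by rewrite sum_eq1 He2.
move=> j _; have [->|jn] := eqVneq (j : nat) 0%N; first by rewrite sb0.
by rewrite sb_low //; rewrite ltn_ord andbT lt0n.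
Qed.

Lemma Up_val : ((\sum_(j < c) (~~ sb j && sb (j + e)%N)) + 1)%N = e.
Proof.
have hc := c_pos.
have h1 : ((\sum_(j < c) (~~ sb j && sb (j + e)%N)) + f c)%N =
    (\sum_(j < c) sb (j + e)%N)%N.
  rewrite /f -big_split; apply: eq_bigr => j _ /=.
  case E: (sb j) => /=; [by rewrite (sb_e E) | by rewrite addn0].
have h2 : (\sum_(j < c) sb (j + e)%N)%N =
    ((\sum_(j < (c - e)%N) sb (j + e)%N) + e)%N.
  rewrite (split_sum (fun j => sb (j + e)%N : nat) (m := (c - e)%N) (n := e)); last lia.
  congr (_ + _)%N; transitivity (\sum_(j < e) 1)%N; last exact: sum_one.
  apply: eq_bigr => j _.
  by rewrite sb_high //; lia.
have h3 : f c = (1 + \sum_(j < (c - e)%N) sb (j + e)%N)%N.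
  rewrite /f (split_sum sb (m := e) (n := (c - e)%N)); last lia.
  rewrite sum_low; congr (_ + _)%N; apply: eq_bigr => j _; by rewrite addnC.
lia.
Qed.


Lemma delta_val delta : length_eq R R (valring v) delta -> (delta + f c)%N = c.
Proof.
move=> hl; rewrite (len_count HR Hv Hic Hres (B := c) hl); last first.
- by move=> z zn hz; exact: TC.
- by move=> z [->|h] zn //; rewrite eqxx in zn.
rewrite /f -big_split /=; transitivity (\sum_(j < c) 1)%N; last exact: sum_one.
apply: eq_bigr => j _; rewrite /sb.
case: (pbP (valset v R j)) => h.
  by rewrite pbF //; case.
rewrite pbT //; split => //.
case: (tpow Hv j) => z [zn vz]; exists z; split => //; right; rewrite vz.
by [].
Qed.

Lemma r_bounds r : length_eq R R (colon R (maxideal R)) r ->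
  (e <= r + k)%N /\ (r + 1 <= e)%N.
Proof.
move=> hl; rewrite (len_count HR Hv Hic Hres (B := c) hl); last first.
- by move=> z zn hz; exact: TC.
- by move=> z hz zn; exact: Col_nn.
split.
  rewrite -{1}Lw_val leq_add2r; apply: leq_sum => j _.
  case: (leqP c (j + e)%N) => hcj; last by rewrite andFb.
  case E: (sb j); first by rewrite andbF.
  rewrite pbT //; split; first by apply: colon_high.
  by move/pbP; rewrite /sb in E; rewrite E.
rewrite -Up_val leq_add2r; apply: leq_sum => j _.
case: (pbP (valset v (colon R (maxideal R)) j /\ ~ valset v R j)) => //.
case=> [[z [hz zn vz]] hnR].
rewrite /sb (pbF hnR) /= pbT //.
exists (z * x); split.
- by apply: hz.
- exact: mulf_neq0.
- by rewrite (vM Hv) // vz Hvx.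
Qed.


Lemma l_mono i : (i.+1 < k.-1)%N -> (l i.+1 <= l i)%N.
Proof.
move=> hi; have h := Hyinc (ltnSn i) hi.
case: (Hl hi) => a1 b1; case: (Hl (ltnW hi)) => a2 b2; nia.
Qed.

Lemma l0_lt_p : (l 0 < p)%N.
Proof.
have h0 : (0 < k.-1)%N by lia.
have := y0_gt_e; case: (Hl h0) => a1 b1; nia.
Qed.

Lemma sumZ n (F : nat -> nat) : \sum_(i < n) (F i)%:Z = ((\sum_(i < n) F i)%N)%:Z.
Proof.
elim: n => [|n IH]; first by rewrite !big_ord0.
by rewrite !big_ord_recr /= IH PoszD.
Qed.

Lemma main_section delta r :
  length_eq R R (valring v) delta ->
  length_eq R R (colon R (maxideal R)) r ->
  [/\ (e%:Z - k%:Z <= r%:Z) && (r%:Z <= e%:Z - 1),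
      (forall i, (i.+1 < k.-1)%N -> (l i.+1 <= l i)%N) /\ (l 0%N)%:Z <= p%:Z - 1,
      c%:Z - delta%:Z = p%:Z + k%:Z + \sum_(i < k.-1) (l i)%:Z &
      delta%:Z = (p%:Z + 1) * (e%:Z - 1) - ((p%:Z + 1) * e%:Z - c%:Z)
                 - \sum_(i < k.-1) ((l i)%:Z + 1)].
Proof.
move=> hd hr.
have [rb1 rb2] := r_bounds hr.
have hdv := delta_val hd; rewrite fc_formula in hdv.
have hS1 : (\sum_(i < k.-1) (l i).+1)%N = ((\sum_(i < k.-1) l i) + k.-1)%N.
  have := sum_one k.-1 => h1; rewrite -[X in (_ + X)%N]h1 -big_split /=.
  by apply: eq_bigr => i _; rewrite addn1.
have hZ1 : \sum_(i < k.-1) (l i)%:Z = ((\sum_(i < k.-1) l i)%N)%:Z by rewrite sumZ.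
have hZ2 : \sum_(i < k.-1) ((l i)%:Z + 1) = ((\sum_(i < k.-1) (l i).+1)%N)%:Z.
  transitivity (\sum_(i < k.-1) ((l i).+1)%:Z); last exact: (sumZ k.-1 (fun i => (l i).+1)).
  by apply: eq_bigr => i _; rewrite -addn1 PoszD.
rewrite hZ1 hZ2 hS1.
rewrite hS1 in hdv.
have hl0 := l0_lt_p.
set L := (\sum_(i < k.-1) l i)%N in hdv *.
split.
- apply/andP; split; lia.
- split; first exact: l_mono.
  lia.
- lia.
- have hk1 : k.-1.+1 = k by lia.
  nia.
Qed.

End Main.

Theorem proposition1p8 (K : fieldType) (R : K -> Prop) (v : K -> int)
  (e c delta r k p : nat) (x : K) (y l : nat -> nat) :
  (* R is a one-dimensional local Noetherian domain with quotient field K *)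
  is_subring R -> quotient_field_of R -> noetherian R -> is_local R ->
  krull_dim1 R ->
  (* not regular *)
  ~ regular_dim1 R ->
  (* analytically irreducible: the integral closure is the DVR of v, finite over R *)
  normalized_valuation v ->
  (forall z, integral_closure R z <-> valring v z) ->
  finite_module R (valring v) ->
  (* residually rational *)
  (forall z, valring v z -> exists a, R a /\ valmax v (z - a)) ->
  (* c : the conductor degree *)
  valset v R c -> (forall n, valset v R (c + n)) ->
  (forall d, valset v R d -> (forall n, valset v R (d + n)) -> (c <= d)%N) ->
  (* delta, r *)
  length_eq R R (valring v) delta ->
  length_eq R R (colon R (maxideal R)) r ->
  (* e and x *)
  valset v R e -> (0 < e)%N -> (forall n, valset v R n -> (0 < n)%N -> (e <= n)%N) ->
  maxideal R x -> x != 0 -> v x = e%:Z ->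
  (* k *)
  length_eq R (sum_cxR R (colon R (valring v)) x) R k ->
  (1 < k)%N ->
  (* p *)
  (c <= p * e + e)%N -> (p * e < c)%N ->
  (* y_1 < ... < y_{k-1} (indexed here by 0 .. k-2) *)
  (forall i j, (i < j)%N -> (j < k.-1)%N -> (y i < y j)%N) ->
  (forall n, [/\ (0 < n)%N, valset v R n &
                 ~ valset v (sum_cxR R (colon R (valring v)) x) n]
             <-> exists2 i, (i < k.-1)%N & y i = n) ->
  (* l_i *)
  (forall i, (i < k.-1)%N -> (y i + l i * e < c)%N /\ (c <= y i + (l i).+1 * e)%N) ->
  [/\ (e%:Z - k%:Z <= r%:Z) && (r%:Z <= e%:Z - 1),
      (forall i, (i.+1 < k.-1)%N -> (l i.+1 <= l i)%N) /\ (l 0%N)%:Z <= p%:Z - 1,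
      c%:Z - delta%:Z = p%:Z + k%:Z + \sum_(i < k.-1) (l i)%:Z &
      delta%:Z = (p%:Z + 1) * (e%:Z - 1) - ((p%:Z + 1) * e%:Z - c%:Z)
                 - \sum_(i < k.-1) ((l i)%:Z + 1)].
Proof.
move=> HR Hq _ Hloc _ Hreg Hv Hic Hfin Hres _ Hc2 Hc3 hdelta hr _ He2 He3 Hxm Hx0 Hvx
  _ Hk Hp1 Hp2 Hyinc Hyiff Hl.
exact: (main_section HR Hq Hloc Hreg Hv Hic Hfin Hres Hc2 Hc3 He2 He3 Hxm Hx0 Hvx
  Hk Hp1 Hp2 Hyinc Hyiff Hl hdelta hr).
Qed.
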